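(* Let $X,Y$ be nominal $\mathrm{Sb}$-sets with $\dim(X)\le 1$. Then the nominal $\mathrm{Perm}$-set $U(X)\mathbin{-\!\!*}U(Y)$ is isomorphic to $U(X\Rightarrow_{\mathrm{Sb}}Y)$, naturally in $X$ and $Y$.
   Context: Atoms $\mathbb{A}$ (countably infinite); $\mathrm{Sb}$ = monoid of functions $\mathbb{A}\to\mathbb{A}$ that differ from the identity on finitely many atoms; $\mathrm{Perm}\subseteq\mathrm{Sb}$ the bijections. For $M\in\{\mathrm{Sb},\mathrm{Perm}\}$, a nominal $M$-set is a set with an $M$-action in which every element $x$ has a finite support (a set $C\subseteq\mathbb{A}$ with $m_1|_C=m_2|_C\Rightarrow m_1x=m_2x$ for $m_i\in M$); each $x$ has a least finite support $\mathrm{supp}(x)$, and $\dim(X)=\max_{x\in X}|\mathrm{supp}(x)|$. $U$ forgets from $\mathrm{Sb}$-actions to $\mathrm{Perm}$-actions. $x\perp y$ means disjoint supports. $A\mathbin{-\!\!*}B$ (magic wand) is the nominal $\mathrm{Perm}$-set of partial functions $f\colon A\rightharpoonup B$ that are finitely supported for the action $(g\cdot f)(a)=g\cdot f(g^{-1}a)$, defined exactly on $\{a\mid f\perp a\}$, and satisfy $\mathrm{supp}(f)=\bigcup_{a\in\mathrm{dom}f}\mathrm{supp}(f(a))\setminus\mathrm{supp}(a)$; it is right adjoint to the separated product $-\otimes A$, where $A\otimes B=\{(a,b)\mid a\perp b\}$. $A\Rightarrow_{\mathrm{Sb}}B$ is the exponential object of the category of nominal $\mathrm{Sb}$-sets: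 the finitely supported $\mathrm{Sb}$-equivariant maps $f\colon\mathrm{Sb}\times A\to B$, with action $(m\cdot f)(n,a)=f(nm,a)$. *)

(* Defs.v *)
From mathcomp Require Import all_boot.
From Stdlib Require Import ClassicalEpsilon.

Set Implicit Arguments.
Unset Strict Implicit.
Unset Printing Implicit Defensive.

Definition atom := nat.

Definition finitary (m : atom -> atom) : Prop :=
  exists s : seq atom, forall a, a \notin s -> m a = a.

Definition Sb : Type := {m : atom -> atom | finitary m}.
Definition sbf (m : Sb) : atom -> atom := proj1_sig m.

Lemma finitary_comp (m n : atom -> atom) :
  finitary m -> finitary n -> finitary (m \o n).
Proof.
move=> [s Hs] [t Ht]; exists (s ++ t) => a.
rewrite mem_cat negb_or => /andP[Ha1 Ha2] /=.
by rewrite Ht // Hs.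
Qed.

(* Monoid product: (m n) = m \o n, so that (m n) . x = m . (n . x). *)
Definition sb_comp (m n : Sb) : Sb :=
  exist _ (sbf m \o sbf n) (finitary_comp (proj2_sig m) (proj2_sig n)).

Definition Perm : Type := {m : Sb | bijective (sbf m)}.
Definition perm_sb (p : Perm) : Sb := proj1_sig p.
Definition permf (p : Perm) : atom -> atom := sbf (perm_sb p).

Lemma bij_ex (f : atom -> atom) :
  bijective f -> exists g, cancel f g /\ cancel g f.
Proof. by case=> g H1 H2; exists g. Qed.

Definition perm_invf (p : Perm) : atom -> atom :=
  proj1_sig (constructive_indefinite_description _ (bij_ex (proj2_sig p))).

Lemma perm_invfK (p : Perm) :
  cancel (permf p) (perm_invf p) /\ cancel (perm_invf p) (permf p).
Proof. exact: (proj2_sig (constructive_indefinite_description _ (bij_ex (proj2_sig p)))). Qed.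

Lemma perm_invf_finitary (p : Perm) : finitary (perm_invf p).
Proof.
have [s Hs] := proj2_sig (perm_sb p).
exists s => a Ha; have [K1 _] := perm_invfK p.
by rewrite -{1}(Hs a Ha) K1.
Qed.

Definition perm_inv_sb (p : Perm) : Sb := exist _ (perm_invf p) (perm_invf_finitary p).

Lemma perm_inv_bij (p : Perm) : bijective (sbf (perm_inv_sb p)).
Proof. by have [K1 K2] := perm_invfK p; exists (permf p). Qed.

Definition perm_inv (p : Perm) : Perm := exist _ (perm_inv_sb p) (perm_inv_bij p).

(* A set with an action of M; [mf] interprets elements of M as functions
   on atoms (mf = sbf for Sb, mf = permf for Perm). *)
Record mset (M : Type) := MSet { mcar :> Type; mact : M -> mcar -> mcar }.
Arguments MSet {M}.
Arguments mact {M m}.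

Definition is_maction {M} (mf : M -> atom -> atom) (X : mset M) : Prop :=
  (forall (i : M) (x : X), mf i =1 id -> mact i x = x) /\
  (forall (m m1 m2 : M) (x : X), mf m =1 mf m1 \o mf m2 ->
       mact m x = mact m1 (mact m2 x)).

Definition is_support {M} (mf : M -> atom -> atom) (X : mset M)
    (C : seq atom) (x : X) : Prop :=
  forall m1 m2 : M, {in C, mf m1 =1 mf m2} -> mact m1 x = mact m2 x.
Arguments is_support {M} mf X C x.

Definition is_least_support {M} (mf : M -> atom -> atom) (X : mset M)
    (C : seq atom) (x : X) : Prop :=
  is_support mf X C x /\
  forall D : seq atom, is_support mf X D x -> {subset C <= D}.
Arguments is_least_support {M} mf X C x.

Definition is_nominal {M} (mf : M -> atom -> atom) (X : mset M) : Prop :=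
  is_maction mf X /\ forall x : X, exists C, is_support mf X C x.

Definition dim_le {M} (mf : M -> atom -> atom) (X : mset M) (n : nat) : Prop :=
  forall (x : X) (C : seq atom), is_least_support mf X C x -> size (undup C) <= n.

Definition perp {M} (mf : M -> atom -> atom) (X Y : mset M) (x : X) (y : Y) : Prop :=
  exists Cx Cy, [/\ is_least_support mf X Cx x, is_least_support mf Y Cy y
                  & forall a, a \in Cx -> a \notin Cy].
Arguments perp {M} mf X Y x y.

Definition equivariant {M} (X Y : mset M) (h : X -> Y) : Prop :=
  forall (m : M) (x : X), h (mact m x) = mact m (h x).

(* Restriction of an action on T to the subset {t | P t}; it is the
   intended action whenever P is closed under it (which holds for the
   objects below); the else-branch is never used in that case. *)
Definition restrict_act {T} (P : T -> Prop) (act : T -> T) (x : {t | P t})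
  : {t | P t} :=
  match excluded_middle_informative (P (act (proj1_sig x))) with
  | left H => exist P _ H
  | right _ => x
  end.
Arguments restrict_act {T} P act x.

Definition U (X : mset Sb) : mset Perm :=
  MSet (mcar X) (fun p x => mact (perm_sb p) x).

Definition pfun_mset (A B : mset Perm) : mset Perm :=
  MSet (A -> option B)
       (fun g f a => omap (mact g) (f (mact (perm_inv g) a))).

Definition wand_pred (A B : mset Perm) (f : A -> option B) : Prop :=
  [/\ exists C, is_support permf (pfun_mset A B) C f,
      forall a : A, f a <> None <-> perp permf (pfun_mset A B) A f a
    & forall C, is_least_support permf (pfun_mset A B) C f ->
        forall b, b \in C <->
          exists (a : A) (y : B) Ca Cy,
            [/\ f a = Some y, is_least_support permf A Ca a,
                is_least_support permf B Cy y, b \in Cy & b \notin Ca]].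

Definition wand (A B : mset Perm) : mset Perm :=
  MSet {f : A -> option B | wand_pred f}
       (fun g => restrict_act (@wand_pred A B) (@mact _ (pfun_mset A B) g)).

Definition expamb (X Y : mset Sb) : mset Sb :=
  MSet (Sb -> X -> Y) (fun m F n a => F (sb_comp n m) a).

(* Sb-equivariant (Sb acting on itself by left multiplication) and
   finitely supported *)
Definition exp_pred (X Y : mset Sb) (F : Sb -> X -> Y) : Prop :=
  (forall (m n : Sb) (a : X), F (sb_comp m n) (mact m a) = mact m (F n a)) /\
  exists C, is_support sbf (expamb X Y) C F.

Definition expSb (X Y : mset Sb) : mset Sb :=
  MSet {F : Sb -> X -> Y | exp_pred F}
       (fun m => restrict_act (@exp_pred X Y) (@mact _ (expamb X Y) m)).

(** * Functorial action of -* on morphisms, as a relation: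
    g = (U h -* U k)(f) is characterised by g(a') = k(f(h a')) for all
    a' with f # a'. *)
Definition wand_map_rel (X X' Y Y' : mset Sb) (h : X' -> X) (k : Y -> Y')
    (f : wand (U X) (U Y)) (g : wand (U X') (U Y')) : Prop :=
  forall a' : X', perp permf (wand (U X) (U Y)) (U X') f a' ->
    proj1_sig g a' = omap k (proj1_sig f (h a')).

(* Main.v *)
Require Import Defs.
From mathcomp Require Import all_boot.
From Stdlib Require Import ClassicalEpsilon FunctionalExtensionality ProofIrrelevance Classical.

Set Implicit Arguments.
Unset Strict Implicit.
Unset Printing Implicit Defensive.


Lemma sb_eq (m1 m2 : Sb) : sbf m1 =1 sbf m2 -> m1 = m2.
Proof.
case: m1 m2 => [f1 p1] [f2 p2] /= H.
have E := functional_extensionality _ _ H; subst f2.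
by rewrite (proof_irrelevance _ p1 p2).
Qed.

Lemma perm_ext (p1 p2 : Perm) : permf p1 =1 permf p2 -> p1 = p2.
Proof.
case: p1 p2 => [m1 b1] [m2 b2] H.
have E : m1 = m2 by apply: sb_eq.
subst m2; by rewrite (proof_irrelevance _ b1 b2).
Qed.

Lemma finitary_id : finitary id. Proof. by exists [::]. Qed.
Definition idSb : Sb := exist _ id finitary_id.
Lemma id_bij : bijective (sbf idSb). Proof. by exists id. Qed.
Definition idPm : Perm := exist _ idSb id_bij.

Definition updf (f : atom -> atom) (d a : atom) := fun z => if z == d then a else f z.
Lemma finitary_upd (m : Sb) d a : finitary (updf (sbf m) d a).
Proof.
case: (proj2_sig m) => s Hs; exists (d :: s) => z.
rewrite inE negb_or => /andP[/negbTE Hd Hz]; rewrite /updf Hd; exact: Hs.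
Qed.
Definition upd (m : Sb) d a : Sb := exist _ (updf (sbf m) d a) (finitary_upd m d a).

Definition swapf (a b : atom) z := if z == a then b else if z == b then a else z.
Lemma swapfK a b : cancel (swapf a b) (swapf a b).
Proof.
move=> z; rewrite /swapf.
case: (eqVneq z a) => [->|Hza]; first by rewrite eqxx; case: eqP.
case: (eqVneq z b) => [->|Hzb]; first by rewrite eqxx.
by rewrite (negbTE Hza) (negbTE Hzb).
Qed.
Lemma finitary_swap a b : finitary (swapf a b).
Proof.
exists [:: a; b] => z; rewrite !inE negb_or => /andP[H1 H2].
by rewrite /swapf (negbTE H1) (negbTE H2).
Qed.
Definition swapSb a b : Sb := exist _ (swapf a b) (finitary_swap a b).
Lemma swap_bij a b : bijective (sbf (swapSb a b)).
Proof. by exists (swapf a b); apply: swapfK. Qed.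
Definition swapP a b : Perm := exist _ (swapSb a b) (swap_bij a b).

Lemma swapf_l a b : swapf a b a = b. Proof. by rewrite /swapf eqxx. Qed.
Lemma swapf_r a b : swapf a b b = a. Proof. by rewrite /swapf eqxx; case: eqP. Qed.
Lemma swapf_o a b z : z != a -> z != b -> swapf a b z = z.
Proof. by move=> H1 H2; rewrite /swapf (negbTE H1) (negbTE H2). Qed.
Lemma swapf_aa a z : swapf a a z = z.
Proof. by rewrite /swapf; case: eqP => // ->. Qed.

Lemma comp_bij (p q : Perm) : bijective (sbf (sb_comp (perm_sb p) (perm_sb q))).
Proof. apply: bij_comp; [exact: (proj2_sig p) | exact: (proj2_sig q)]. Qed.
Definition pcmp (p q : Perm) : Perm := exist _ (sb_comp (perm_sb p) (perm_sb q)) (comp_bij p q).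

Lemma permK (p : Perm) : cancel (permf p) (permf (perm_inv p)).
Proof. exact: (perm_invfK p).1. Qed.
Lemma permKV (p : Perm) : cancel (permf (perm_inv p)) (permf p).
Proof. exact: (perm_invfK p).2. Qed.
Lemma perm_inj (p : Perm) : injective (permf p).
Proof. exact: can_inj (permK p). Qed.

Definition fresh (s : seq atom) : atom := (foldr maxn 0 s).+1.
Lemma fresh_notin s : fresh s \notin s.
Proof.
have H : forall z, z \in s -> z <= foldr maxn 0 s.
  elim: s => //= x s IH z; rewrite inE => /orP[/eqP->|/IH h]; first exact: leq_maxl.
  exact: leq_trans h (leq_maxr _ _).
by apply/negP => /H; rewrite /fresh ltnn.
Qed.

Lemma mem_map_perm (p : Perm) (s : seq atom) z :
  (z \in map (permf p) s) = (permf (perm_inv p) z \in s).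
Proof.
apply/idP/idP => [/mapP[w Hw ->]|H]; first by rewrite permK.
by apply/mapP; exists (permf (perm_inv p) z); rewrite ?permKV.
Qed.

Definition pb (P : Prop) : bool := if excluded_middle_informative P then true else false.
Lemma pbP (P : Prop) : reflect P (pb P).
Proof. by rewrite /pb; case: excluded_middle_informative => H; constructor. Qed.

Section GenAct.
Variables (M : Type) (mf : M -> atom -> atom) (comp : M -> M -> M) (i0 : M).
Hypothesis Hcomp : forall m1 m2, mf (comp m1 m2) =1 mf m1 \o mf m2.
Hypothesis Hi0 : mf i0 =1 id.
Variable X : mset M.
Hypothesis HX : is_maction mf X.

Lemma act_id (i : M) (x : X) : mf i =1 id -> mact i x = x.
Proof. exact: HX.1. Qed.
Lemma act_comp m m1 m2 (x : X) : mf m =1 mf m1 \o mf m2 -> mact m x = mact m1 (mact m2 x).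
Proof. exact: HX.2. Qed.
Lemma act_ext m1 m2 (x : X) : mf m1 =1 mf m2 -> mact m1 x = mact m2 x.
Proof.
move=> H; rewrite (@act_comp m1 m2 i0 x); first by rewrite (act_id x Hi0).
by move=> z /=; rewrite H Hi0.
Qed.
Lemma act_comp2 m1 m2 n1 n2 (x : X) :
  mf m1 \o mf m2 =1 mf n1 \o mf n2 -> mact m1 (mact m2 x) = mact n1 (mact n2 x).
Proof.
move=> H; rewrite -(@act_comp (comp m1 m2)) // -(@act_comp (comp n1 n2)) //.
apply: act_ext => z; by rewrite !Hcomp.
Qed.
Lemma act_comp1 m n1 n2 (x : X) :
  mf m =1 mf n1 \o mf n2 -> mact m x = mact n1 (mact n2 x).
Proof. exact: act_comp. Qed.

Lemma supp_sub (C D : seq atom) (x : X) : is_support mf X C x -> {subset C <= D} -> is_support mf X D x.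
Proof. move=> H S m1 m2 E; apply: H => z Hz; apply: E; exact: S. Qed.
Lemma supp_eqi (C D : seq atom) (x : X) : is_support mf X C x -> C =i D -> is_support mf X D x.
Proof. by move=> H E; apply: supp_sub H _ => z; rewrite E. Qed.
Lemma supp_map C (x : X) m : is_support mf X C x -> is_support mf X (map (mf m) C) (mact m x).
Proof.
move=> HC m1 m2 H.
rewrite -(@act_comp (comp m1 m)) // -(@act_comp (comp m2 m)) //.
apply: HC => z Hz; rewrite !Hcomp /=; apply: H; exact: map_f.
Qed.
Lemma least_eq (C1 C2 : seq atom) (x : X) :
  is_least_support mf X C1 x -> is_least_support mf X C2 x -> C1 =i C2.
Proof.
move=> [H1 L1] [H2 L2] z; apply/idP/idP => Hz; [exact: L1 H2 _ Hz | exact: L2 H1 _ Hz].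
Qed.
Lemma least_sub (L D : seq atom) (x : X) : is_least_support mf X L x -> is_support mf X D x -> {subset L <= D}.
Proof. by move=> [_ H] /H. Qed.
Lemma least_ext (C1 C2 : seq atom) (x : X) :
  is_least_support mf X C1 x -> C1 =i C2 -> is_least_support mf X C2 x.
Proof.
move=> [H1 L1] E; split; first exact: supp_eqi H1 E.
by move=> D HD z; rewrite -E; apply: L1.
Qed.
End GenAct.

Lemma sbcompE : forall m1 m2 : Sb, sbf (sb_comp m1 m2) =1 sbf m1 \o sbf m2.
Proof. by []. Qed.
Lemma sbidE : sbf idSb =1 id. Proof. by []. Qed.
Lemma pcmpE : forall p q : Perm, permf (pcmp p q) =1 permf p \o permf q.
Proof. by []. Qed.
Lemma pidE : permf idPm =1 id. Proof. by []. Qed.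

Section SbSupp.
Variable X : mset Sb.
Hypothesis HX : is_maction sbf X.

Lemma supp_remove A B b (x : X) :
  is_support sbf X A x -> is_support sbf X B x -> b \notin A ->
  is_support sbf X (filter (predC1 b) B) x.
Proof.
move=> HA HB bA m1 m2 E.
pose c := fresh (A ++ B).
have cAB := fresh_notin (A ++ B); rewrite -/c mem_cat negb_or in cAB.
case/andP: cAB => cA cB.
pose rho := upd idSb b c.
have rx : mact rho x = x.
  rewrite (HA rho idSb) ?(act_id HX) // => z zA /=.
  rewrite /updf; case: eqP => // Ez; subst z; by rewrite zA in bA.
have HB' : is_support sbf X (map (sbf rho) B) x.
  by move: (supp_map sbcompE HX (m:=rho) HB); rewrite rx.
pose m1' := upd m1 c (sbf m2 c).
have -> : mact m1 x = mact m1' x.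
  apply: HA => z zA /=; rewrite /updf; case: eqP => // Ez; subst z; by rewrite zA in cA.
apply: HB' => z /mapP[w wB ->].
rewrite /rho /m1' /= /updf /=.
have [Ewb|wb] := eqVneq w b; first by rewrite eqxx.
case: (eqVneq w c) => [Ew|wc]; first by rewrite -Ew wB in cB.
apply: E; by rewrite mem_filter /= wb.
Qed.

Lemma supp_inter A B (x : X) :
  is_support sbf X A x -> is_support sbf X B x ->
  is_support sbf X (filter (fun z => z \in A) B) x.
Proof.
move=> HA HB.
suff H : forall s, all (fun z => z \notin A) s ->
  is_support sbf X (filter (fun z => z \notin s) B) x.
  apply: (supp_eqi (H (filter (fun z => z \notin A) B) _)).
    by apply/allP => z; rewrite mem_filter => /andP[].
  move=> z; rewrite !mem_filter; by case zA: (z \in A); case zB: (z \in B).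
elim=> [|b s IH] /=.
  by move=> _; apply: (supp_eqi HB) => z; rewrite mem_filter.
case/andP=> bA sA.
apply: (supp_eqi (supp_remove HA (IH sA) bA)).
move=> z; rewrite !mem_filter !inE negb_or /=; by case: (z == b); case: (z \in s).
Qed.

Lemma least_exists C (x : X) : is_support sbf X C x -> exists L, is_least_support sbf X L x.
Proof.
move=> HC.
pose P a := forall D, is_support sbf X D x -> a \in D.
suff H : forall t : seq atom, is_support sbf X (filter (fun a => (a \notin t) || pb (P a)) C) x.
  exists (filter (fun a => pb (P a)) C); split.
    apply: (supp_eqi (H C)) => z; rewrite !mem_filter.
    by case zC: (z \in C); rewrite ?andbF // !andbT zC.
  by move=> D HD z; rewrite mem_filter => /andP[/pbP Pz _]; apply: Pz.
elim=> [|b t IH].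
  by apply: (supp_eqi HC) => z; rewrite mem_filter.
case: (pbP (P b)) => Pb.
  apply: (supp_sub IH) => z; rewrite !mem_filter !inE negb_or.
  case: (eqVneq z b) => [->|]; first by rewrite (introT (pbP _) Pb) orbT.
  by [].
have [D [HD bD]] : exists D, is_support sbf X D x /\ b \notin D.
  apply: NNPP => Hn; apply: Pb => D HD; apply: NNPP => bD; apply: Hn; exists D; split => //.
  by apply/negP.
apply: (supp_sub (supp_remove HD IH bD)) => z; rewrite !mem_filter !inE negb_or.
by case/andP=> -> /andP[-> ->].
Qed.
End SbSupp.

Section PermGen.
Variable P : mset Perm.
Hypothesis HP : is_maction permf P.

Lemma pact_ext p q (x : P) : permf p =1 permf q -> mact p x = mact q x.
Proof. exact: (act_ext pidE HP). Qed.
Lemma pact_comp p q (x : P) : mact p (mact q x) = mact (pcmp p q) x.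
Proof. by rewrite (act_comp HP (m:=pcmp p q) (m1:=p) (m2:=q)). Qed.
Lemma pactK p (x : P) : mact (perm_inv p) (mact p x) = x.
Proof. rewrite pact_comp; apply: (act_id HP) => z /=; exact: permK. Qed.
Lemma pactKV p (x : P) : mact p (mact (perm_inv p) x) = x.
Proof. rewrite pact_comp; apply: (act_id HP) => z /=; exact: permKV. Qed.

Lemma fix_supp C (x : P) :
  (forall p : Perm, {in C, permf p =1 id} -> mact p x = x) -> is_support permf P C x.
Proof.
move=> H m1 m2 E.
have -> : mact m1 x = mact m2 (mact (pcmp (perm_inv m2) m1) x).
  rewrite pact_comp; apply: pact_ext => z; by rewrite !pcmpE /= permKV.
rewrite H // => z Hz; by rewrite pcmpE /= E // permK.
Qed.
Lemma supp_fix C (x : P) p : is_support permf P C x -> {in C, permf p =1 id} -> mact p x = x.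
Proof. move=> HC E; rewrite (HC p idPm) //; exact: (act_id HP). Qed.

Lemma least_map C (x : P) p :
  is_least_support permf P C x -> is_least_support permf P (map (permf p) C) (mact p x).
Proof.
move=> [HC L]; split; first exact: (supp_map pcmpE HP).
move=> D HD z; rewrite mem_map_perm => Hz.
have HD' := supp_map pcmpE HP (m:=perm_inv p) HD.
rewrite pactK in HD'.
have := L _ HD' _ Hz; by rewrite (mem_map (@perm_inj (perm_inv p))).
Qed.
End PermGen.

Lemma U_maction (X : mset Sb) : is_maction sbf X -> is_maction permf (U X).
Proof.
move=> [H1 H2]; split.
  by move=> i x Hi /=; apply: H1.
by move=> m m1 m2 x E /=; apply: H2.
Qed.

Lemma pinv_comp (p q r : Perm) : permf p =1 permf q \o permf r ->
  permf (perm_inv p) =1 permf (perm_inv r) \o permf (perm_inv q).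
Proof.
move=> E z; apply: (@perm_inj p); rewrite permKV E /=; by rewrite !permKV.
Qed.

Lemma pinv_id (p : Perm) : permf p =1 id -> permf (perm_inv p) =1 id.
Proof. move=> E z; apply: (@perm_inj p); by rewrite permKV E. Qed.

Lemma pfun_maction (A B : mset Perm) :
  is_maction permf A -> is_maction permf B -> is_maction permf (pfun_mset A B).
Proof.
move=> HA HB; split.
  move=> i f Hi /=; apply: functional_extensionality => a.
  rewrite (act_id HA (i := perm_inv i)); last exact: pinv_id.
  by case: (f a) => //= y; rewrite (act_id HB).
move=> m m1 m2 f E /=; apply: functional_extensionality => a.
rewrite (act_comp HA (m:=perm_inv m) (m1:=perm_inv m2) (m2:=perm_inv m1)); last exact: pinv_comp.
case: (f _) => //= y; by rewrite (act_comp HB (m:=m) (m1:=m1) (m2:=m2)).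
Qed.

Section NomSb.
Variable X : mset Sb.
Hypothesis nX : is_nominal sbf X.

Lemma least_ex (x : X) : exists L, is_least_support sbf X L x.
Proof. have [C HC] := nX.2 x; exact: (least_exists nX.1 HC). Qed.

Definition Lsupp (x : X) : seq atom := proj1_sig (constructive_indefinite_description _ (least_ex x)).
Lemma Lsupp_least (x : X) : is_least_support sbf X (Lsupp x) x.
Proof. exact: (proj2_sig (constructive_indefinite_description _ (least_ex x))). Qed.
Lemma Lsupp_supp (x : X) : is_support sbf X (Lsupp x) x.
Proof. exact: (Lsupp_least x).1. Qed.
Lemma Lsupp_sub (x : X) D : is_support sbf X D x -> {subset Lsupp x <= D}.
Proof. exact: (Lsupp_least x).2. Qed.

Lemma sb_psupp C (x : X) : is_support sbf X C x -> is_support permf (U X) C x.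
Proof. by move=> H m1 m2 E; apply: H. Qed.

Lemma psupp_sb C (x : X) : is_support permf (U X) C x -> is_support sbf X C x.
Proof.
move=> HC; apply: (supp_sub (Lsupp_supp (x:=x))) => a aL.
apply/negPn/negP => aC.
pose b := fresh (Lsupp x ++ C).
have := fresh_notin (Lsupp x ++ C); rewrite -/b mem_cat negb_or => /andP[bL bC].
have sx : mact (swapSb a b) x = x.
  have := HC (swapP a b) idPm; rewrite /= => ->; first exact: (act_id nX.1).
  move=> z zC /=; apply: swapf_o; apply/eqP => E; subst z; [by rewrite zC in aC | by rewrite zC in bC].
have HL := supp_map sbcompE nX.1 (m := swapSb a b) (Lsupp_supp (x:=x)).
rewrite sx in HL.
have /mapP[z zL Ez] := Lsupp_sub HL aL.
have zb : z = b.
  apply: (can_inj (swapfK a b)); rewrite swapf_r; exact: (esym Ez).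
by rewrite -zb zL in bL.
Qed.

Lemma least_U C (x : X) : is_least_support permf (U X) C x <-> is_least_support sbf X C x.
Proof.
split=> [[H1 H2]|[H1 H2]]; split.
- exact: psupp_sb.
- by move=> D /sb_psupp; apply: H2.
- exact: sb_psupp.
- by move=> D /psupp_sb; apply: H2.
Qed.

Lemma Lsupp_U (x : X) : is_least_support permf (U X) (Lsupp x) x.
Proof. by apply/least_U; apply: Lsupp_least. Qed.
End NomSb.
Arguments Lsupp_supp {X} nX x [m1 m2] _.

Lemma updf_d f d a : updf f d a d = a. Proof. by rewrite /updf eqxx. Qed.
Lemma updf_o f d a z : z != d -> updf f d a z = f z.
Proof. by move=> H; rewrite /updf (negbTE H). Qed.

Lemma size_undup_le1 (L : seq atom) z : size (undup L) <= 1 -> z \in L -> z = head 0 L.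
Proof.
case: L => [|h t] // Hs zL /=.
case: (eqVneq z h) => // zh.
have U2 : uniq [:: z; h] by rewrite /= inE zh.
have S2 : {subset [:: z; h] <= undup (h :: t)}.
  by move=> w; rewrite !inE mem_undup => /orP[/eqP->|/eqP->] //; rewrite inE eqxx.
by have := uniq_leq_size U2 S2; rewrite (leq_gtF (leq_trans _ Hs)).
Qed.

Section Dim.
Variable X : mset Sb.
Hypothesis nX : is_nominal sbf X.
Hypothesis dX : dim_le sbf X 1.

Definition ax (x : X) : atom := head 0 (Lsupp nX x).

Lemma ax_supp (x : X) : is_support sbf X [:: ax x] x.
Proof.
apply: (supp_sub (Lsupp_supp nX x)) => z zL.
by rewrite inE (size_undup_le1 (dX (Lsupp_least nX x)) zL).
Qed.

Lemma ax_cases a (x : X) : is_support sbf X [:: a] x -> is_support sbf X [::] x \/ ax x = a.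
Proof.
move=> Ha; have Hs := Lsupp_sub (nX:=nX) Ha; have HL := Lsupp_supp nX x.
rewrite /ax; move: Hs HL; case: (Lsupp nX x) => [|h t] Hs HL; first by left.
right; have := Hs h; rewrite !inE eqxx => /(_ isT) /eqP //.
Qed.

Lemma supp1_cases a a' (x : X) : is_support sbf X [:: a] x -> is_support sbf X [:: a'] x ->
  a = a' \/ is_support sbf X [::] x.
Proof.
move=> H1 H2; case: (ax_cases H1) => [|E1]; first by right.
case: (ax_cases H2) => [|E2]; first by right.
by left; rewrite -E1 -E2.
Qed.
End Dim.
Arguments ax_supp {X} nX dX x [m1 m2] _.

Section Main.
Variables X Y : mset Sb.
Hypothesis nX : is_nominal sbf X.
Hypothesis nY : is_nominal sbf Y.
Hypothesis dX : dim_le sbf X 1.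

Let HXs : is_maction sbf X := nX.1.
Let HYs : is_maction sbf Y := nY.1.
Let HA : is_maction permf (U X) := U_maction HXs.
Let HB : is_maction permf (U Y) := U_maction HYs.
Let HP : is_maction permf (pfun_mset (U X) (U Y)) := pfun_maction HA HB.

Notation P := (pfun_mset (U X) (U Y)).
Notation LX := (Lsupp nX).
Notation LY := (Lsupp nY).

Lemma sb_agreeY S (y : Y) m1 m2 : is_support sbf Y S y -> {in S, sbf m1 =1 sbf m2} ->
  mact m1 y = mact m2 y.
Proof. by move=> H; apply: H. Qed.

Lemma compY m1 m2 (y : Y) : mact m1 (mact m2 y) = mact (sb_comp m1 m2) y.
Proof. by rewrite (act_comp HYs (m:=sb_comp m1 m2) (m1:=m1) (m2:=m2)). Qed.
Lemma compX m1 m2 (x : X) : mact m1 (mact m2 x) = mact (sb_comp m1 m2) x.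
Proof. by rewrite (act_comp HXs (m:=sb_comp m1 m2) (m1:=m1) (m2:=m2)). Qed.

Lemma fsupp_perm D (f : P) (p : Perm) (x : X) :
  is_support permf P D f -> {in D, permf p =1 id} ->
  f (mact (perm_sb p) x) = omap (mact (perm_sb p)) (f x).
Proof.
move=> HD Hp.
have E := supp_fix HP HD Hp.
have := congr1 (fun g : P => g (mact (perm_sb p) x)) E => /= <-.
by move: (pactK HA p x) => /= ->.
Qed.

Lemma val_supp D (f : P) S (x : X) y :
  is_support permf P D f -> is_support sbf X S x -> f x = Some y ->
  is_support sbf Y (D ++ S) y.
Proof.
move=> HD HS Hf; apply: (psupp_sb nY); apply: (fix_supp HB) => p Hp.
have px : mact (perm_sb p) x = x.
  rewrite (HS (perm_sb p) idSb); first exact: (act_id HXs).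
  by move=> z zS; apply: Hp; rewrite mem_cat zS orbT.
have := @fsupp_perm D f p x HD.
rewrite px Hf /= => H.
have : Some y = Some (mact (perm_sb p) y) by apply: H => z zD; apply: Hp; rewrite mem_cat zD.
by case.
Qed.

Definition Gf (f : X -> option Y) (n : Sb) (x : X) (a d : atom) : option Y :=
  omap (mact (upd n d a)) (f (mact (swapSb a d) x)).

Definition Hdom (D : seq atom) (f : P) :=
  is_support permf P D f /\
  (forall x : X, (forall z, z \in D -> z \notin LX x) -> f x <> None).

Lemma swap_supp a d (x : X) : is_support sbf X [:: a] x ->
  is_support sbf X [:: d] (mact (swapSb a d) x).
Proof.
move=> H; have := supp_map sbcompE HXs (m:=swapSb a d) H.
by rewrite /= swapf_l.
Qed.

Lemma G_some D f a d (x : X) : Hdom D f -> is_support sbf X [:: a] x -> d \notin D ->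
  exists y, f (mact (swapSb a d) x) = Some y.
Proof.
move=> [HD Hd] Ha dD.
case E: (f _) => [y|]; first by exists y.
exfalso; apply: (Hd (mact (swapSb a d) x)) E => z zD; apply/negP => zL.
have := Lsupp_sub (nX:=nX) (@swap_supp a d x Ha) zL; rewrite inE => /eqP Ez.
by rewrite -Ez zD in dD.
Qed.

Lemma G_indep_d D f n a d d' (x : X) : Hdom D f -> is_support sbf X [:: a] x ->
  d \notin D -> d' \notin D -> Gf f n x a d = Gf f n x a d'.
Proof.
move=> Hf Ha dD d'D.
have [y Ey] := G_some Hf Ha dD.
have Exd : mact (swapSb a d') x = mact (perm_sb (swapP d d')) (mact (swapSb a d) x).
  rewrite compX; apply: Ha => z; rewrite inE => /eqP -> /=; by rewrite !swapf_l.
have Hsw : {in D, permf (swapP d d') =1 id}.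
  move=> z zD /=; apply: swapf_o; apply/eqP => E; subst z; [by rewrite zD in dD|by rewrite zD in d'D].
rewrite /Gf Exd (fsupp_perm _ Hf.1 Hsw) Ey /=; congr Some.
rewrite compY; apply: (val_supp Hf.1 (@swap_supp a d x Ha) Ey) => z.
rewrite mem_cat inE => /orP[zD|/eqP->] /=.
- have zd : z != d by apply/eqP => E; subst z; rewrite zD in dD.
  have zd' : z != d' by apply/eqP => E; subst z; rewrite zD in d'D.
  by rewrite swapf_o // !updf_o.
- by rewrite swapf_l !updf_d.
Qed.

Lemma G_empty D f n a d (x : X) : Hdom D f -> is_support sbf X [::] x -> d \notin D ->
  Gf f n x a d = omap (mact n) (f x).
Proof.
move=> Hf Hx dD; rewrite /Gf.
have -> : mact (swapSb a d) x = x.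
  rewrite (Hx (swapSb a d) idSb) //; exact: (act_id HXs).
case E: (f x) => [y|] //=; congr Some.
apply: (val_supp Hf.1 Hx E) => z; rewrite cats0 => zD /=.
have zd : z != d by apply/eqP => E'; subst z; rewrite zD in dD.
by rewrite updf_o.
Qed.

Lemma G_indep D f n a a' d d' (x : X) : Hdom D f -> is_support sbf X [:: a] x ->
  is_support sbf X [:: a'] x -> d \notin D -> d' \notin D -> Gf f n x a d = Gf f n x a' d'.
Proof.
move=> Hf Ha Ha' dD d'D.
case: (@supp1_cases X nX _ _ x Ha Ha') => [E|H0].
  rewrite -E; exact: (G_indep_d _ Hf Ha dD d'D).
by rewrite (G_empty _ _ Hf H0 dD) (G_empty _ _ Hf H0 d'D).
Qed.

Lemma G_supp D' f n m1 m2 a d (x : X) : is_support permf P D' f -> is_support sbf X [:: a] x ->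
  {in D', sbf m1 =1 sbf m2} -> Gf f (sb_comp n m1) x a d = Gf f (sb_comp n m2) x a d.
Proof.
move=> HD Ha E12.
rewrite /Gf; case E: (f _) => [y|] //=; congr Some.
apply: (val_supp HD (@swap_supp a d x Ha) E) => z; rewrite mem_cat inE /=.
case: (eqVneq z d) => [->|zd]; first by rewrite !updf_d.
rewrite !updf_o //= orbF => zD; by rewrite E12.
Qed.

Lemma swap_fix (D : seq atom) d d' : d \notin D -> d' \notin D -> {in D, permf (swapP d d') =1 id}.
Proof.
move=> dD d'D z zD /=; apply: swapf_o; apply/eqP => E; subst z;
  [by rewrite zD in dD|by rewrite zD in d'D].
Qed.

Section Phi0.
Variables (D : seq atom) (f : P).
Hypothesis Hf : Hdom D f.

Definition dd (x : X) := fresh (D ++ [:: ax nX x]).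
Lemma dd_notin x : dd x \notin D.
Proof. by have := fresh_notin (D ++ [:: ax nX x]); rewrite mem_cat negb_or => /andP[]. Qed.

Lemma F_ex n x : exists y, Gf f n x (ax nX x) (dd x) = Some y.
Proof.
have [y Ey] := G_some Hf (ax_supp nX dX x) (dd_notin x).
by exists (mact (upd n (dd x) (ax nX x)) y); rewrite /Gf Ey.
Qed.

Definition Fz (n : Sb) (x : X) : Y :=
  proj1_sig (constructive_indefinite_description _ (F_ex n x)).
Lemma F_spec n x : Gf f n x (ax nX x) (dd x) = Some (Fz n x).
Proof. exact: (proj2_sig (constructive_indefinite_description _ (F_ex n x))). Qed.

Lemma F_G n x a d : is_support sbf X [:: a] x -> d \notin D -> Gf f n x a d = Some (Fz n x).
Proof.
move=> Ha dD; rewrite -F_spec; apply: (G_indep _ Hf Ha (ax_supp nX dX x) dD (dd_notin x)).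
Qed.

Lemma F_equiv m n x : Fz (sb_comp m n) (mact m x) = mact m (Fz n x).
Proof.
set a := ax nX x; set d := dd x.
have Ha : is_support sbf X [:: a] x := ax_supp nX dX x.
have dD : d \notin D := dd_notin x.
have Hma : is_support sbf X [:: sbf m a] (mact m x).
  by have := supp_map sbcompE HXs (m:=m) Ha.
set d' := fresh D; have d'D : d' \notin D := fresh_notin D.
have E1 := F_G (sb_comp m n) Hma d'D.
have E2 := F_G n Ha dD.
have [y Ey] := G_some Hf Ha dD.
rewrite /Gf Ey /= in E2; case: E2 => E2.
have Exd : mact (swapSb (sbf m a) d') (mact m x) = mact (perm_sb (swapP d d')) (mact (swapSb a d) x).
  rewrite !compX; apply: Ha => z; rewrite inE => /eqP -> /=; by rewrite !swapf_l.
rewrite /Gf Exd (fsupp_perm _ Hf.1 (swap_fix dD d'D)) Ey /= in E1.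
case: E1 => <-; rewrite -E2 !compY.
apply: (val_supp Hf.1 (@swap_supp a d x Ha) Ey) => z.
rewrite mem_cat inE => /orP[zD|/eqP->] /=.
- have zd : z != d by apply/eqP => E; subst z; rewrite zD in dD.
  have zd' : z != d' by apply/eqP => E; subst z; rewrite zD in d'D.
  by rewrite swapf_o // !updf_o.
- by rewrite swapf_l !updf_d.
Qed.

Lemma F_supp D' : is_support permf P D' f -> is_support sbf (expamb X Y) D' Fz.
Proof.
move=> HD' m1 m2 E; apply: functional_extensionality => n; apply: functional_extensionality => x /=.
have Ha := ax_supp nX dX x.
apply: Some_inj.
rewrite -(F_G (sb_comp n m1) Ha (dd_notin x)) -(F_G (sb_comp n m2) Ha (dd_notin x)).
exact: (@G_supp D' f n m1 m2 (ax nX x) (dd x) x HD' Ha E).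
Qed.

Lemma F_id x : (forall z, z \in D -> z \notin LX x) -> f x = Some (Fz idSb x).
Proof.
move=> Hdis.
have Ha := ax_supp nX dX x.
have [H0|Hne] : is_support sbf X [::] x \/ ax nX x \in LX x.
  rewrite /ax; have HL := Lsupp_supp nX x; case: (LX x) HL => [|h t] HL; first by left.
  by right; rewrite inE eqxx.
  rewrite -(F_G idSb Ha (dd_notin x)) (G_empty _ _ Hf H0 (dd_notin x)).
  by case: (f x) => //= y; rewrite (act_id HYs).
have aD : ax nX x \notin D by apply/negP => aD; have := Hdis _ aD; rewrite Hne.
rewrite -(F_G idSb Ha aD) /Gf.
rewrite (act_id HXs (i:=swapSb _ _)); last by move=> z /=; rewrite swapf_aa.
by case: (f x) => //= y; rewrite (act_id HYs) // => z /=; rewrite /updf; case: eqP => [->|].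
Qed.

Lemma F_exp : exp_pred Fz.
Proof. split; [exact: F_equiv | exists D; exact: (F_supp Hf.1)]. Qed.
End Phi0.

Lemma pactKX (g : Perm) (a : X) : mact (perm_sb (perm_inv g)) (mact (perm_sb g) a) = a.
Proof. exact: (pactK HA g a). Qed.
Lemma pactKY (g : Perm) (a : Y) : mact (perm_sb (perm_inv g)) (mact (perm_sb g) a) = a.
Proof. exact: (pactK HB g a). Qed.
Lemma pactKVX (g : Perm) (a : X) : mact (perm_sb g) (mact (perm_sb (perm_inv g)) a) = a.
Proof. exact: (pactKV HA g a). Qed.
Lemma pactKVY (g : Perm) (a : Y) : mact (perm_sb g) (mact (perm_sb (perm_inv g)) a) = a.
Proof. exact: (pactKV HB g a). Qed.

Lemma mem_map_inv (p : Perm) (s : seq atom) z :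
  (z \in map (permf (perm_inv p)) s) = (permf p z \in s).
Proof. by rewrite -{1}(permK p z) (mem_map (@perm_inj (perm_inv p))). Qed.

Lemma perp_iff C (f : P) (x : X) : is_least_support permf P C f ->
  (perp permf P (U X) f x <-> forall z, z \in C -> z \notin LX x).
Proof.
move=> HC; split.
  move=> [Cx [Cy [H1 H2 H3]]] z zC.
  have E1 := least_eq H1 HC; have E2 := least_eq H2 (Lsupp_U nX x).
  by rewrite -E2; apply: H3; rewrite E1.
by move=> H; exists C, (LX x); split => //; apply: Lsupp_U.
Qed.

Lemma wand_least (f : wand (U X) (U Y)) : exists C, is_least_support permf P C (proj1_sig f).
Proof.
apply: NNPP => Hn.
case: (proj2_sig f) => _ Hdomf _.
have Hnone : forall a, proj1_sig f a = None.
  move=> a; apply: NNPP => Ha; apply: Hn.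
  have [Cx [Cy [H1 _ _]]] := (Hdomf a).1 Ha; by exists Cx.
apply: Hn; exists [::]; split; last by [].
move=> m1 m2 _ /=; apply: functional_extensionality => a; by rewrite !Hnone.
Qed.

Definition wC (f : wand (U X) (U Y)) : seq atom :=
  proj1_sig (constructive_indefinite_description _ (wand_least f)).
Lemma wC_least f : is_least_support permf P (wC f) (proj1_sig f).
Proof. exact: (proj2_sig (constructive_indefinite_description _ (wand_least f))). Qed.

Lemma wand_Hdom (f : wand (U X) (U Y)) : Hdom (wC f) (proj1_sig f).
Proof.
split; first exact: (wC_least f).1.
move=> x Hdis; case: (proj2_sig f) => _ Hdomf _.
by apply/(Hdomf x)/(perp_iff _ (wC_least f)).
Qed.

Lemma wand_dom (f : wand (U X) (U Y)) x :
  proj1_sig f x <> None <-> (forall z, z \in wC f -> z \notin LX x).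
Proof.
case: (proj2_sig f) => _ Hdomf _.
rewrite (Hdomf x); exact: perp_iff (wC_least f).
Qed.

Lemma disj_map (p : Perm) (C L : seq atom) :
  (forall z, z \in C -> z \notin map (permf (perm_inv p)) L) <->
  (forall z, z \in map (permf p) C -> z \notin L).
Proof.
split=> H z.
  by rewrite mem_map_perm => /H; rewrite mem_map_inv permKV.
move=> zC; rewrite mem_map_inv; apply: H; exact: map_f.
Qed.

Lemma LX_act (p : Perm) (x : X) : LX (mact (perm_sb p) x) =i map (permf p) (LX x).
Proof.
apply: least_eq (Lsupp_U nX _) _; exact: (least_map HA p (Lsupp_U nX x)).
Qed.
Lemma LY_least (y : Y) C : is_least_support permf (U Y) C y -> C =i LY y.
Proof. move=> H; exact: least_eq H (Lsupp_U nY y). Qed.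

Lemma wand_closed (g : Perm) (f : wand (U X) (U Y)) :
  wand_pred (mact g (proj1_sig f : P)).
Proof.
set h : P := mact g (proj1_sig f : P).
have Hh : forall a, h a = omap (mact (perm_sb g)) (proj1_sig f (mact (perm_sb (perm_inv g)) a)) by [].
have HC := wC_least f.
have HC' : is_least_support permf P (map (permf g) (wC f)) h := least_map HP g HC.
case: (proj2_sig f) => Hs Hdomf Hcl.
split.
- by exists (map (permf g) (wC f)); exact: HC'.1.
- move=> a; rewrite (perp_iff _ HC') Hh.
  have -> : (omap (mact (perm_sb g)) (proj1_sig f (mact (perm_sb (perm_inv g)) a)) <> None) <->
            (proj1_sig f (mact (perm_sb (perm_inv g)) a) <> None).
    by case: (proj1_sig f _).
  rewrite wand_dom -disj_map.
  split=> H z zC; have := H z zC; by rewrite (LX_act (perm_inv g) a).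
- move=> C'' HC'' b; have E := least_eq HC'' HC'; rewrite E.
  split.
  + rewrite mem_map_perm => /(Hcl _ HC) [a0 [y0 [Ca0 [Cy0 [Ef H1 H2 H3 H4]]]]].
    exists (mact (perm_sb g) a0), (mact (perm_sb g) y0), (map (permf g) Ca0), (map (permf g) Cy0).
    split.
    * by rewrite Hh pactKX Ef.
    * exact: (least_map HA g H1).
    * exact: (least_map HB g H2).
    * by rewrite mem_map_perm.
    * by rewrite mem_map_perm.
  + move=> [a [y [Ca [Cy [Ef H1 H2 H3 H4]]]]].
    rewrite mem_map_perm; apply/(Hcl _ HC).
    move: Ef; rewrite Hh; case Ef0: (proj1_sig f _) => [y0|] //= [Ey].
    exists (mact (perm_sb (perm_inv g)) a), y0,
      (map (permf (perm_inv g)) Ca), (map (permf (perm_inv g)) Cy).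
    split => //.
    * exact: (least_map HA (perm_inv g) H1).
    * have := least_map HB (perm_inv g) H2; rewrite -Ey => Hl; by rewrite -[y0](pactK HB g y0).
    * by rewrite (mem_map (@perm_inj (perm_inv g))).
    * by rewrite (mem_map (@perm_inj (perm_inv g))).
Qed.

Lemma val_restrict T (Q : T -> Prop) (act : T -> T) (x : {t | Q t}) :
  Q (act (proj1_sig x)) -> proj1_sig (restrict_act Q act x) = act (proj1_sig x).
Proof. by rewrite /restrict_act; case: excluded_middle_informative. Qed.

Lemma sig_ext T (Q : T -> Prop) (u v : {t | Q t}) : proj1_sig u = proj1_sig v -> u = v.
Proof.
case: u v => [u pu] [v pv] /= E; subst v; by rewrite (proof_irrelevance _ pu pv).
Qed.

Lemma wand_act_val (g : Perm) (f : wand (U X) (U Y)) :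
  proj1_sig (mact g f) = (mact g (proj1_sig f : P)).
Proof. exact: (val_restrict (wand_closed g f)). Qed.

Lemma wand_supp C (f : wand (U X) (U Y)) :
  is_support permf (wand (U X) (U Y)) C f <-> is_support permf P C (proj1_sig f).
Proof.
split=> H m1 m2 E.
  by rewrite -!wand_act_val (H m1 m2 E).
by apply: sig_ext; rewrite !wand_act_val; apply: H.
Qed.

Lemma wand_least_iff C (f : wand (U X) (U Y)) :
  is_least_support permf (wand (U X) (U Y)) C f <-> is_least_support permf P C (proj1_sig f).
Proof.
split=> [[H1 H2]|[H1 H2]]; split.
- by apply/wand_supp.
- by move=> D /wand_supp; apply: H2.
- by apply/wand_supp.
- by move=> D /wand_supp; apply: H2.
Qed.

Lemma expamb_maction : is_maction sbf (expamb X Y).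
Proof.
split.
  move=> i F Hi /=; apply: functional_extensionality => n; apply: functional_extensionality => a.
  by have -> : sb_comp n i = n by apply: sb_eq => z /=; rewrite Hi.
move=> m m1 m2 F E /=; apply: functional_extensionality => n; apply: functional_extensionality => a.
by have -> : sb_comp n m = sb_comp (sb_comp n m1) m2 by apply: sb_eq => z /=; rewrite E.
Qed.

Lemma exp_closed (m : Sb) (F : expSb X Y) : exp_pred (mact m (proj1_sig F : expamb X Y)).
Proof.
case: (proj2_sig F) => Heq [C HC]; split.
  move=> k n a /=.
  by have -> : sb_comp (sb_comp k n) m = sb_comp k (sb_comp n m) by apply: sb_eq.
exists (map (sbf m) C); exact: (supp_map sbcompE expamb_maction HC).
Qed.

Lemma exp_act_val (m : Sb) (F : expSb X Y) :
  proj1_sig (mact m F) = mact m (proj1_sig F : expamb X Y).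
Proof. exact: (val_restrict (exp_closed m F)). Qed.

Lemma sb_comp_id m : sb_comp m idSb = m. Proof. by apply: sb_eq. Qed.
Lemma sb_id_comp m : sb_comp idSb m = m. Proof. by apply: sb_eq. Qed.

Lemma Fsupp_app S (Fv : Sb -> X -> Y) m1 m2 x :
  is_support sbf (expamb X Y) S Fv -> {in S, sbf m1 =1 sbf m2} -> Fv m1 x = Fv m2 x.
Proof.
move=> H E; have := congr1 (fun G : expamb X Y => G idSb x) (H m1 m2 E).
by rewrite /= !sb_id_comp.
Qed.

Definition phiF (f : wand (U X) (U Y)) : Sb -> X -> Y := Fz (wand_Hdom f).
Definition phi (f : wand (U X) (U Y)) : U (expSb X Y) :=
  exist _ (phiF f) (F_exp (wand_Hdom f)).

Lemma exp_least (F : expSb X Y) : exists L, is_least_support sbf (expamb X Y) L (proj1_sig F).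
Proof. case: (proj2_sig F) => _ [C HC]; exact: (@least_exists (expamb X Y) expamb_maction C (proj1_sig F : expamb X Y) HC). Qed.
Definition LF (F : expSb X Y) : seq atom :=
  proj1_sig (constructive_indefinite_description _ (exp_least F)).
Lemma LF_least F : is_least_support sbf (expamb X Y) (LF F) (proj1_sig F).
Proof. exact: (proj2_sig (constructive_indefinite_description _ (exp_least F))). Qed.

Definition psi0 (F : expSb X Y) : P :=
  fun x => if all (fun z => z \notin LX x) (LF F) then Some (proj1_sig F idSb x) else None.

Lemma pfun_app (g : Perm) (h : P) x :
  (mact g h : P) x = omap (mact (perm_sb g)) (h (mact (perm_sb (perm_inv g)) x)).
Proof. by []. Qed.

Section Psi.
Variable F : expSb X Y.
Notation Fv := (proj1_sig F).
Notation L := (LF F).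
Let HFe : forall m n a, Fv (sb_comp m n) (mact m a) = mact m (Fv n a) := (proj2_sig F).1.
Let HL : is_support sbf (expamb X Y) L Fv := (LF_least F).1.

Lemma psi_supp : is_support permf P L (psi0 F).
Proof.
apply: (fix_supp HP) => p Hp; apply: functional_extensionality => x.
rewrite pfun_app /psi0.
have -> : all (fun z => z \notin LX (mact (perm_sb (perm_inv p)) x)) L = all (fun z => z \notin LX x) L.
  apply: eq_in_all => z zL; by rewrite (LX_act (perm_inv p) x) mem_map_inv Hp.
case: ifP => //= _; congr Some.
rewrite -HFe pactKVX sb_comp_id; apply: (Fsupp_app _ HL) => z zL; exact: Hp.
Qed.

Lemma psi_xd a d x : is_support sbf X [:: a] x -> d \notin L ->
  psi0 F (mact (swapSb a d) x) = Some (Fv idSb (mact (swapSb a d) x)).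
Proof.
move=> Ha dL; rewrite /psi0.
have -> // : all (fun z => z \notin LX (mact (swapSb a d) x)) L.
apply/allP => z zL; apply/negP => zLx.
have := Lsupp_sub (nX:=nX) (@swap_supp a d x Ha) zLx; rewrite inE => /eqP Ez.
by rewrite -Ez zL in dL.
Qed.

Lemma psi_G n x a d : is_support sbf X [:: a] x -> d \notin L ->
  Gf (psi0 F) n x a d = Some (Fv n x).
Proof.
move=> Ha dL; rewrite /Gf psi_xd //=; congr Some.
rewrite -HFe sb_comp_id compX.
rewrite (Ha _ idSb); last by move=> z; rewrite inE => /eqP -> /=; rewrite swapf_l updf_d.
rewrite (act_id HXs) //; apply: (Fsupp_app _ HL) => z zL /=.
have zd : z != d by apply/eqP => E; subst z; rewrite zL in dL.
by rewrite updf_o.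
Qed.

Lemma psi_Hdom : Hdom L (psi0 F).
Proof.
split; first exact: psi_supp.
move=> x Hdis; rewrite /psi0.
by have -> : all (fun z => z \notin LX x) L by apply/allP.
Qed.

Lemma psi_Fz D (H : Hdom D (psi0 F)) : {subset L <= D} -> Fz H = Fv.
Proof.
move=> LD; apply: functional_extensionality => n; apply: functional_extensionality => x.
apply: Some_inj.
have dL : dd D x \notin L by apply/negP => /LD; apply/negP; exact: dd_notin.
by rewrite -(F_G H n (ax_supp nX dX x) (dd_notin D x)) (psi_G n (ax_supp nX dX x) dL).
Qed.

Lemma psi_least : is_least_support permf P L (psi0 F).
Proof.
split; first exact: psi_supp.
move=> D' HD'; have := F_supp psi_Hdom HD'.
rewrite (psi_Fz psi_Hdom) // => HF; exact: (LF_least F).2 _ HF.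
Qed.

Lemma psi_wand : wand_pred (psi0 F).
Proof.
split.
- by exists L; exact: psi_supp.
- move=> a; rewrite (perp_iff a psi_least) /psi0.
  case: allP => [H|H]; split.
  + by move=> _ z zL; apply: H.
  + by [].
  + by move=> /(_ erefl).
  + by move=> H'; exfalso; apply: H => z; apply: H'.
- move=> C'' HC'' b; rewrite (least_eq HC'' psi_least); split.
  + move=> bL; apply: NNPP => Hn.
    have Hs : is_support sbf (expamb X Y) (filter (predC1 b) L) Fv.
      move=> m1 m2 E; apply: functional_extensionality => n; apply: functional_extensionality => x /=.
      apply: Some_inj.
      have Ha := ax_supp nX dX x.
      set a := ax nX x; set d := fresh (L ++ [:: a]).
      have dL : d \notin L by have := fresh_notin (L ++ [:: a]); rewrite mem_cat negb_or => /andP[].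
      rewrite -(psi_G _ Ha dL) -(psi_G _ Ha dL) /Gf psi_xd //=; congr Some.
      set xd := mact (swapSb a d) x; set y := Fv idSb xd.
      have Ex : psi0 F xd = Some y by rewrite /xd psi_xd.
      have bd : b != d by apply/eqP => E'; subst b; rewrite bL in dL.
      have bY : b \notin LY y.
        apply/negP => bY; apply: Hn; exists xd, y, (LX xd), (LY y); split => //.
        - exact: Lsupp_U.
        - exact: Lsupp_U.
        - apply/negP => bx; have := Lsupp_sub (nX:=nX) (@swap_supp a d x Ha) bx.
          by rewrite inE (negbTE bd).
      have HyL := Lsupp_sub (nX:=nY) (val_supp psi_supp (@swap_supp a d x Ha) Ex).
      apply: (Lsupp_supp nY y) => z zY /=.
      case: (eqVneq z d) => [->|zd]; first by rewrite !updf_d.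
      rewrite !updf_o //=; congr (sbf n _); apply: E; rewrite mem_filter /=.
      have zb : z != b by apply/eqP => E'; subst z; rewrite zY in bY.
      have := HyL _ zY; rewrite mem_cat inE (negbTE zd) orbF => ->; by rewrite zb.
    have := (LF_least F).2 _ Hs b bL; by rewrite mem_filter /= eqxx.
  + move=> [a [y [Ca [Cy [Ef H1 H2 H3 H4]]]]].
    have Hy := Lsupp_sub (nX:=nY) (val_supp psi_supp (Lsupp_supp nX a) Ef).
    have := Hy b; rewrite -(LY_least H2) mem_cat => /(_ H3) /orP[//|bLa].
    by rewrite (least_eq H1 (Lsupp_U nX a)) bLa in H4.
Qed.
End Psi.

Definition psi (F : expSb X Y) : wand (U X) (U Y) := exist _ (psi0 F) (psi_wand F).

Lemma phi_psi (F : expSb X Y) : phi (psi F) = F.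
Proof.
apply: sig_ext => /=; rewrite /phiF.
apply: psi_Fz => z zL.
by rewrite (least_eq (wC_least (psi F)) (psi_least F)).
Qed.

Lemma psi_phi (f : wand (U X) (U Y)) : psi (phi f) = f.
Proof.
apply: sig_ext => /=; apply: functional_extensionality => x.
rewrite /psi0.
pose Hf := wand_Hdom f.
have LC : LF (phi f) =i wC f.
  have LsC : {subset LF (phi f) <= wC f}.
    exact: (LF_least (phi f)).2 _ (F_supp Hf (wC_least f).1).
  move=> c; apply/idP/idP; first exact: LsC.
  move=> cC; case: (proj2_sig f) => _ _ Hcl.
  have [a [y [Ca [Cy [Ef H1 H2 H3 H4]]]]] := (Hcl _ (wC_least f) c).1 cC.
  have Hdis : forall z, z \in wC f -> z \notin LX a by apply/(wand_dom f a); rewrite Ef.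
  have Ey : y = phiF f idSb a.
    by have := F_id Hf Hdis; rewrite Ef => -[].
  have Hy : is_support sbf Y (LF (phi f) ++ LX a) y.
    apply: (psupp_sb nY); apply: (fix_supp HB) => p Hp.
    change (mact (perm_sb p) y = y).
    have pa : mact (perm_sb p) a = a.
      rewrite ((Lsupp_supp nX a) (perm_sb p) idSb); first exact: (act_id HXs).
      by move=> z zL; apply: Hp; rewrite mem_cat zL orbT.
    rewrite Ey /phiF -F_equiv pa sb_comp_id.
    apply: (Fsupp_app _ (LF_least (phi f)).1) => z zL; apply: Hp; by rewrite mem_cat zL.
  have Hs := Lsupp_sub (nX:=nY) Hy; have := Hs c; rewrite -(LY_least H2) mem_cat => /(_ H3) /orP[//|cLa].
  by rewrite (least_eq H1 (Lsupp_U nX a)) cLa in H4.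
case: allP => [H|H].
  have Hdis : forall z, z \in wC f -> z \notin LX x by move=> z; rewrite -LC; apply: H.
  by rewrite (F_id Hf Hdis).
case E: (proj1_sig f x) => [y|] //.
have Hd : forall z, z \in wC f -> z \notin LX x by apply/(wand_dom f x); rewrite E.
exfalso; apply: H => z zL; apply: Hd; by rewrite -LC.
Qed.

Lemma phi_bij : bijective phi.
Proof. by exists psi; [exact: psi_phi | exact: phi_psi]. Qed.

Lemma phi_equiv (g : Perm) (f : wand (U X) (U Y)) : phi (mact g f) = mact g (phi f).
Proof.
apply: sig_ext.
change (phiF (mact g f) = proj1_sig (mact (perm_sb g) (phi f : expSb X Y))).
rewrite exp_act_val; apply: functional_extensionality => n; apply: functional_extensionality => x.
rewrite /=; apply: Some_inj.
have Ha := ax_supp nX dX x; set a := ax nX x.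
set C := wC f; set C' := wC (mact g f).
set d := fresh (C' ++ map (permf g) C ++ [:: a]).
have := fresh_notin (C' ++ map (permf g) C ++ [:: a]); rewrite -/d !mem_cat !negb_or => /and3P[dC' dgC _].
set e := permf (perm_inv g) d.
have eC : e \notin C by rewrite /e -mem_map_perm.
rewrite /phiF -(F_G (wand_Hdom (mact g f)) n Ha dC') -(F_G (wand_Hdom f) (sb_comp n (perm_sb g)) Ha eC).
rewrite /Gf wand_act_val pfun_app.
have Exe : mact (perm_sb (perm_inv g)) (mact (swapSb a d) x) = mact (swapSb a e) x.
  rewrite !compX; apply: Ha => z; rewrite inE => /eqP -> /=; by rewrite !swapf_l.
rewrite Exe.
have [y Ey] := G_some (wand_Hdom f) Ha eC.
rewrite Ey /=; congr Some.
rewrite !compY; apply: (val_supp (wC_least f).1 (@swap_supp a e x Ha) Ey) => z.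
have ge : sbf (perm_sb g) e = d := permKV g d.
rewrite mem_cat inE => /orP[zC|/eqP->] /=.
- have ze : z != e by apply/eqP => E; subst z; rewrite zC in eC.
  have gzd : sbf (perm_sb g) z != d.
    apply/eqP => E; move/eqP: ze; apply; rewrite /e -E; exact: (esym (permK g z)).
  by rewrite !updf_o.
- by rewrite ge !updf_d.
Qed.
End Main.

Section Nat.
Variables X X' Y Y' : mset Sb.
Hypotheses (nX : is_nominal sbf X) (nX' : is_nominal sbf X').
Hypotheses (nY : is_nominal sbf Y) (nY' : is_nominal sbf Y').
Hypotheses (dX : dim_le sbf X 1) (dX' : dim_le sbf X' 1).
Variables (h : X' -> X) (k : Y -> Y').
Hypotheses (eh : equivariant h) (ek : equivariant k).
Variable f : wand (U X) (U Y).

Notation Ff := (phiF nX dX f).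

Lemma h_supp S (a' : X') : is_support sbf X' S a' -> is_support sbf X S (h a').
Proof. by move=> H m1 m2 E; rewrite -!eh (H m1 m2 E). Qed.

Definition Fk : Sb -> X' -> Y' := fun n a' => k (Ff n (h a')).

Lemma Fk_supp : is_support sbf (expamb X' Y') (wC f) Fk.
Proof.
move=> m1 m2 E; apply: functional_extensionality => n; apply: functional_extensionality => a /=.
rewrite /Fk; congr k.
have := F_supp nY dX (wand_Hdom nX f) (wC_least f).1 E.
move=> /(congr1 (fun G : expamb X Y => G n (h a))) /=.
done.
Qed.

Lemma Fk_exp : exp_pred Fk.
Proof.
split; last by exists (wC f); exact: Fk_supp.
move=> m n a; rewrite /Fk eh /phiF.
by rewrite (F_equiv nY dX (wand_Hdom nX f)) ek.
Qed.

Definition Fke : expSb X' Y' := exist _ Fk Fk_exp.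

Lemma perp_wand (x : X') : perp permf (wand (U X) (U Y)) (U X') f x <->
  (forall z, z \in wC f -> z \notin Lsupp nX' x).
Proof.
split.
  move=> [Cx [Cy [H1 H2 H3]]] z zC.
  have E1 := least_eq (proj1 (wand_least_iff nX nY _ f) H1) (wC_least f).
  have E2 := least_eq H2 (Lsupp_U nX' x).
  by rewrite -E2; apply: H3; rewrite E1.
move=> H; exists (wC f), (Lsupp nX' x); split => //.
  exact/(wand_least_iff nX nY)/wC_least.
exact: Lsupp_U.
Qed.

Lemma nat_exists : wand_map_rel h k f (psi nX' nY' dX' Fke).
Proof.
move=> a' /perp_wand Hdis /=; rewrite /psi0.
have LC : {subset LF Fke <= wC f} := (LF_least Fke).2 _ Fk_supp.
have -> : all (fun z => z \notin Lsupp nX' a') (LF Fke).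
  by apply/allP => z /LC; apply: Hdis.
have Hs := Lsupp_sub (nX:=nX) (h_supp (Lsupp_supp nX' a')).
have Hd : forall z, z \in wC f -> z \notin Lsupp nX (h a').
  move=> z zC; apply/negP => /Hs; apply/negP; exact: Hdis.
by rewrite (F_id nY dX (wand_Hdom nX f) Hd).
Qed.

Lemma nat_unique (g : wand (U X') (U Y')) : wand_map_rel h k f g ->
  proj1_sig (phi nX' nY' dX' g) = (fun n a' => k (proj1_sig (phi nX nY dX f) n (h a'))).
Proof.
move=> Hg /=; apply: functional_extensionality => n; apply: functional_extensionality => a'.
apply: Some_inj.
have Ha' := ax_supp nX' dX' a'; set a := ax nX' a'.
have Ha := h_supp Ha'.
set d := fresh (wC g ++ wC f ++ [:: a]).
have := fresh_notin (wC g ++ wC f ++ [:: a]); rewrite -/d !mem_cat !negb_or => /and3P[dg df _].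
have E2 := F_G nY dX (wand_Hdom nX f) n Ha df.
have [y Ey] := G_some (wand_Hdom nX f) Ha df.
rewrite /Gf Ey /= in E2; case: E2 => E2.
rewrite /phiF -E2 -(F_G nY' dX' (wand_Hdom nX' g) n Ha' dg) /Gf.
have Hp : perp permf (wand (U X) (U Y)) (U X') f (mact (swapSb a d) a').
  apply/perp_wand => z zC; apply/negP => zL.
  have := Lsupp_sub (nX:=nX') (swap_supp nX' Ha') zL; rewrite inE => /eqP Ez.
  by rewrite -Ez zC in df.
rewrite (Hg _ Hp) eh Ey /=; by rewrite ek.
Qed.
End Nat.

Theorem mainTheorem4 :
  exists phi : forall (X Y : mset Sb), is_nominal sbf X -> is_nominal sbf Y ->
                 dim_le sbf X 1 -> wand (U X) (U Y) -> U (expSb X Y),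
    (forall (X Y : mset Sb) (nX : is_nominal sbf X) (nY : is_nominal sbf Y)
            (dX : dim_le sbf X 1),
        bijective (phi X Y nX nY dX) /\
        forall (g : Perm) (f : wand (U X) (U Y)),
          phi X Y nX nY dX (mact g f) = mact g (phi X Y nX nY dX f)) /\
    (forall (X X' Y Y' : mset Sb)
            (nX : is_nominal sbf X) (nX' : is_nominal sbf X')
            (nY : is_nominal sbf Y) (nY' : is_nominal sbf Y')
            (dX : dim_le sbf X 1) (dX' : dim_le sbf X' 1)
            (h : X' -> X) (k : Y -> Y'),
        equivariant h -> equivariant k ->
        forall f : wand (U X) (U Y),
          (exists g : wand (U X') (U Y'), wand_map_rel h k f g) /\
          forall g : wand (U X') (U Y'), wand_map_rel h k f g ->
            proj1_sig (phi X' Y' nX' nY' dX' g : {F : Sb -> X' -> Y' | exp_pred F}) =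
            (fun (n : Sb) (a' : X') =>
               k (proj1_sig (phi X Y nX nY dX f : {F : Sb -> X -> Y | exp_pred F}) n (h a')))).
Proof.
exists (fun X Y nX nY dX => @phi X Y nX nY dX); split.
  move=> X Y nX nY dX; split; [exact: phi_bij | exact: phi_equiv].
move=> X X' Y Y' nX nX' nY nY' dX dX' h k eh ek f; split.
  by eexists; apply: nat_exists.
by move=> g Hg; exact: (nat_unique nX nX' nY nY' dX dX' eh ek Hg).
Qed.
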